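(* Let $n\in\mathbb N$, $q\in\mathbb N_0$ and $\beta_1,\dots,\beta_q\in\mathbb R$. Then there exists $N\in\mathbb N$ such that \[\max_{m\in\{1,\dots,N\}}\Big\|a\,(\sin(m\alpha_1),\dots,\sin(m\alpha_n))+\sum_{k=1}^q\sin(m\beta_k)B_k+mS\Big\|\ge\|S\|\] for all $a\in\mathbb C^n$ (a column vector), $\alpha_1,\dots,\alpha_n\in\mathbb R$, $B_1,\dots,B_q\in\mathbb C^{n\times n}$ and $S\in\mathrm{Skew}(n,\mathbb C)$.
   Context: $\|\cdot\|$ is the Frobenius norm on $\mathbb C^{n\times n}$; $a\,(\sin(m\alpha_1),\dots,\sin(m\alpha_n))$ is the $n\times n$ matrix obtained as the product of the column vector $a$ with the given row vector; $\mathrm{Skew}(n,\mathbb C)$ is the set of complex $n\times n$ matrices $S$ with $S^T=-S$. For $q=0$ the sum is empty. *)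

(* Defs.v *)
From HB Require Import structures.
From mathcomp Require Import all_boot all_order all_algebra.
From mathcomp Require Import reals trigo.
From mathcomp Require Import complex.
Set Implicit Arguments. Unset Strict Implicit. Unset Printing Implicit Defensive.
Import Order.TTheory GRing.Theory Num.Theory.
Local Open Scope ring_scope.

Definition frob (R : realType) (n : nat) (A : 'M[R[i]]_n) : R :=
  Num.sqrt (\sum_(i < n) \sum_(j < n)
              ((complex.Re (A i j)) ^+ 2 + (complex.Im (A i j)) ^+ 2)).

Definition sinrow (R : realType) (n : nat) (m : nat) (alpha : 'I_n -> R)
  : 'rV[R[i]]_n :=
  \row_(j < n) ((sin (m%:R * alpha j))%:C)%C.

(* Main.v *)
Require Import Defs.
From HB Require Import structures.
From mathcomp Require Import all_boot all_order all_algebra.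
From mathcomp Require Import reals trigo.
From mathcomp Require Import complex.
From mathcomp Require Import ring lra zify.
Import Order.TTheory GRing.Theory Num.Theory.
Local Open Scope ring_scope.

Section A.
Variable R : realType.

Lemma sin_rec (x b : R) : sin x + sin (x + b + b) = 2 * cos b * sin (x + b).
Proof.
have h1 : x = (x + b) - b by ring.
rewrite {1}h1 (sinB (x + b) b) (sinD (x + b) b); ring.
Qed.

Lemma sin_cos1 (b : R) : cos b = 1 -> forall k : nat, sin (k%:R * b) = 0.
Proof.
move=> hc; have hs : sin b = 0.
  by have := sin2cos2 b; rewrite hc expr1n subrr => /eqP; rewrite sqrf_eq0 => /eqP.
elim=> [|k IH]; first by rewrite mul0r sin0.
by rewrite -addn1 natrD mulrDl mul1r sinD IH hs; ring.
Qed.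

Definition sh (c : nat -> R) : nat -> R := fun m => if m is m'.+1 then c m' else 0.

Lemma sum_sh D (c : nat -> R) (f : nat -> R -> R) : (forall m, f m 0 = 0) ->
  \sum_(m < D.+1) f m (sh c m) = \sum_(m < D) f m.+1 (c m).
Proof.
move=> f0; rewrite big_ord_recl [sh c _]/= f0 add0r; apply: eq_bigr => i _.
by rewrite lift0.
Qed.

Lemma sum_ext D (c : nat -> R) (f : nat -> R -> R) : (forall m, f m 0 = 0) ->
  c D = 0 -> \sum_(m < D.+1) f m (c m) = \sum_(m < D) f m (c m).
Proof. by move=> f0 cD; rewrite big_ord_recr /= cD f0 addr0. Qed.

Definition good (L : seq R) D (c : nat -> R) :=
  [/\ c 0%N = 0, (forall m, (D <= m)%N -> c m = 0),
      (forall b j, b \in L -> \sum_(m < D) c m * sin ((m + j)%:R * b) = 0)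
    & 0 < \sum_(m < D) c m].

Lemma good_sh L D c : good L D c -> good L D.+1 (sh c).
Proof.
case=> c0 cD ck cQ; split => //.
- by case=> // m; rewrite ltnS => /cD.
- move=> b j bL; rewrite (sum_sh _ _ (fun m v => v * sin ((m + j)%:R * b))); last by move=> m; rewrite mul0r.
  rewrite -[RHS](ck b j.+1 bL); apply: eq_bigr => i _; by rewrite addSnnS.
- by rewrite (sum_sh D c (fun _ v => v)).
Qed.

Definition step (b : R) (c : nat -> R) : nat -> R :=
  fun m => c m - 2 * cos b * sh c m + sh (sh c) m.

Lemma sum_step D (b : R) (c : nat -> R) (x : nat -> R) :
  (forall m, (D <= m)%N -> c m = 0) ->
  \sum_(m < D.+2) step b c m * x m =
  \sum_(m < D) c m * (x m - 2 * cos b * x m.+1 + x m.+2).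
Proof.
move=> cD.
have e1 : \sum_(m < D.+2) c m * x m = \sum_(m < D) c m * x m.
  rewrite (sum_ext D.+1 c (fun m v => v * x m)); last by rewrite cD.
    by rewrite (sum_ext D c (fun m v => v * x m)) ?cD // => m; rewrite mul0r.
  by move=> m; rewrite mul0r.
have e2 : \sum_(m < D.+2) sh c m * x m = \sum_(m < D) c m * x m.+1.
  rewrite (sum_sh D.+1 c (fun m v => v * x m)); last by move=> m; rewrite mul0r.
  by rewrite (sum_ext D c (fun m v => v * x m.+1)) ?cD // => m; rewrite mul0r.
have e3 : \sum_(m < D.+2) sh (sh c) m * x m = \sum_(m < D) c m * x m.+2.
  rewrite (sum_sh D.+1 (sh c) (fun m v => v * x m)); last by move=> m; rewrite mul0r.
  by rewrite (sum_sh D c (fun m v => v * x m.+1)) // => m; rewrite mul0r.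
transitivity (\sum_(m < D) c m * x m - 2 * cos b * \sum_(m < D) c m * x m.+1
   + \sum_(m < D) c m * x m.+2).
  rewrite -e1 -e2 -e3 mulr_sumr -sumrB -big_split; apply: eq_bigr => i _.
  rewrite /step /=; ring.
rewrite mulr_sumr -sumrB -big_split; apply: eq_bigr => i _ /=; ring.
Qed.


Lemma natS_mul (k : nat) (b : R) : (k.+1)%:R * b = k%:R * b + b.
Proof. by rewrite -addn1 natrD mulrDl mul1r. Qed.

Lemma good_step L D c b : good L D c -> cos b != 1 -> good (b :: L) D.+2 (step b c).
Proof.
case=> c0 cD ck cQ cb; split.
- by rewrite /step /= c0 mulr0 subr0 addr0.
- move=> m; case: m => [|[|m]] //; rewrite !ltnS => hm.
  rewrite /step /= !cD ?mulr0 ?subr0 ?addr0 //; lia.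
- move=> b' j; rewrite inE => /orP [/eqP -> | bL].
    rewrite (sum_step _ _ _ (fun m => sin ((m + j)%:R * b))) //; apply: big1 => i _.
    rewrite !addSn !natS_mul; have := sin_rec ((i + j)%:R * b) b => h.
    by rewrite (_ : _ - _ + _ = 0) ?mulr0 //; lra.
  rewrite (sum_step _ _ _ (fun m => sin ((m + j)%:R * b'))) //.
  transitivity (\sum_(m < D) c m * sin ((m + j)%:R * b')
     - 2 * cos b * \sum_(m < D) c m * sin ((m + j.+1)%:R * b')
     + \sum_(m < D) c m * sin ((m + j.+2)%:R * b')).
    rewrite mulr_sumr -sumrB -big_split; apply: eq_bigr => i _ /=.
    by rewrite -!addSnnS; ring.
  by rewrite !ck // mulr0 subrr addr0.
- have := sum_step D b c (fun _ => 1) cD.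
  under eq_bigr do rewrite mulr1.
  move=> ->.
  rewrite (eq_bigr (fun m : 'I_D => c m * (2 - 2 * cos b))); last by move=> i _; ring.
  rewrite -mulr_suml; apply: mulr_gt0 => //.
  have := cos_le1 b; rewrite le_eqVlt (negbTE cb) /= => h; lra.
Qed.

Lemma good_skip L D c b : good L D c -> cos b = 1 -> good (b :: L) D c.
Proof.
case=> c0 cD ck cQ cb; split => // b' j; rewrite inE => /orP [/eqP -> | bL]; last exact: ck.
by apply: big1 => i _; rewrite sin_cos1 // mulr0.
Qed.

Lemma good_ex L : exists D c, good L D c.
Proof.
elim: L => [|b L [D [c gc]]].
  exists 2%N, (fun m => if m == 1%N then 1 else 0); split => //.
  - by case=> // [] [] // m.
  - by rewrite !big_ord_recl big_ord0 /= addr0 add0r ltr01.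
case: (eqVneq (cos b) 1) => cb.
  by exists D, c; apply: good_skip.
by exists D.+2, (step b c); apply: good_step.
Qed.


Lemma good_iter L D c t : good L D c ->
  [/\ good L (D + t) (iter t sh c),
      \sum_(m < D + t) `|iter t sh c m| = \sum_(m < D) `|c m|,
      \sum_(m < D + t) iter t sh c m * m%:R =
        \sum_(m < D) c m * m%:R + t%:R * \sum_(m < D) c m
    & \sum_(m < D + t) iter t sh c m = \sum_(m < D) c m].
Proof.
move=> gc; elim: t => [|t [g1 e1 e2 e3]].
  by rewrite addn0 /= mul0r addr0.
rewrite addnS /=; split.
- exact: good_sh.
- by rewrite (sum_sh _ _ (fun _ v => `|v|)) ?normr0.
- rewrite (sum_sh _ _ (fun m v => v * m%:R)); last by move=> m; rewrite mul0r.
  rewrite (eq_bigr (fun m : 'I_(D + t) => iter t sh c m * m%:R + iter t sh c m)); last first.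
    by move=> i _; rewrite -natr1 mulrDr mulr1.
  by rewrite big_split /= e2 e3 -natr1; ring.
- by rewrite (sum_sh (D + t) (iter t sh c) (fun _ v => v)).
Qed.

Lemma stepA q (beta : 'I_q -> R) : exists D (c : nat -> R),
  [/\ c 0%N = 0, (forall m, (D <= m)%N -> c m = 0),
      (forall k, \sum_(m < D) c m * sin (m%:R * beta k) = 0),
      0 < \sum_(m < D) `|c m|
    & 2 * \sum_(m < D) `|c m| <= \sum_(m < D) c m * m%:R].
Proof.
have [D [c gc]] := good_ex (map beta (enum 'I_q)).
set C := \sum_(m < D) `|c m|.
set K0 := \sum_(m < D) c m * m%:R.
set Q := \sum_(m < D) c m.
have Qp : 0 < Q by case: gc.
have QC : Q <= C by apply: le_trans (ler_norm_sum _ _ _); rewrite ler_norm.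
set x := `|(2 * C - K0) / Q|.
set t := Num.Def.archi_bound x.
have xt : x < t%:R by apply: archi_boundP; rewrite /x normr_ge0.
have [[c0 cD ck cQ] e1 e2 e3] := @good_iter _ _ _ t gc.
exists (D + t)%N, (iter t sh c); split => //.
- move=> k; have := ck (beta k) 0%N; rewrite map_f ?mem_enum // => /(_ isT) h.
  by rewrite -[RHS]h; apply: eq_bigr => i _; rewrite addn0.
- by rewrite e1; apply: lt_le_trans QC.
rewrite e1 e2 -/C -/K0 -/Q.
have h1 : (2 * C - K0) / Q <= x by rewrite /x ler_norm.
have h2 : (2 * C - K0) / Q * Q = 2 * C - K0 by rewrite mulfVK // gt_eqF.
have h3 : (2 * C - K0) / Q * Q <= t%:R * Q.
  by rewrite ler_pM2r //; apply: le_trans h1 (ltW xt).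
lra.
Qed.

End A.
Section B.
Variable R : realType.
Variable n : nat.
Implicit Types (A v : 'I_n -> R) (T : 'I_n -> 'I_n -> R).

Lemma sum2D (f g : 'I_n -> 'I_n -> R) :
  \sum_i \sum_j (f i j + g i j) = \sum_i \sum_j f i j + \sum_i \sum_j g i j.
Proof. rewrite -big_split; apply: eq_bigr => i _; by rewrite -big_split. Qed.

Lemma sum3D (f g : 'I_n -> 'I_n -> 'I_n -> R) :
  \sum_i \sum_j \sum_k (f i j k + g i j k) =
  \sum_i \sum_j \sum_k f i j k + \sum_i \sum_j \sum_k g i j k.
Proof. rewrite -sum2D; apply: eq_bigr => i _; apply: eq_bigr => j _; by rewrite -big_split. Qed.

Lemma sum3Z (a : R) (f : 'I_n -> 'I_n -> 'I_n -> R) :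
  \sum_i \sum_j \sum_k (a * f i j k) = a * \sum_i \sum_j \sum_k f i j k.
Proof.
rewrite mulr_sumr; apply: eq_bigr => i _; rewrite mulr_sumr; apply: eq_bigr => j _.
by rewrite mulr_sumr.
Qed.

Lemma swap3 (F : 'I_n -> 'I_n -> 'I_n -> R) :
  \sum_i \sum_j \sum_k F i j k = \sum_k \sum_i \sum_j F i j k.
Proof.
under eq_bigr do rewrite exchange_big.
by rewrite exchange_big.
Qed.

Section Core.
Variables (A : 'I_n -> R) (T : 'I_n -> 'I_n -> R).
Hypothesis skew : forall i j, T j i = - T i j.
Let alpha := \sum_i A i ^+ 2.
Let T2 := \sum_i \sum_j T i j ^+ 2.
Let w k := \sum_i A i * T i k.
Let Z := \sum_k w k ^+ 2.

Lemma wneg k : \sum_i A i * T k i = - w k.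
Proof. rewrite /w -sumrN; apply: eq_bigr => i _; by rewrite skew mulrN. Qed.

Lemma s1 : \sum_i \sum_j \sum_k (A i * T j k) ^+ 2 = alpha * T2.
Proof.
rewrite /alpha /T2 mulr_suml; apply: eq_bigr => i _; rewrite mulr_sumr; apply: eq_bigr => j _.
by rewrite mulr_sumr; apply: eq_bigr => k _; rewrite exprMn.
Qed.

Lemma s2 : \sum_i \sum_j \sum_k (A j * T k i) ^+ 2 = alpha * T2.
Proof.
rewrite exchange_big /=.
transitivity (alpha * \sum_i \sum_k T k i ^+ 2).
  rewrite /alpha mulr_suml; apply: eq_bigr => j _; rewrite mulr_sumr; apply: eq_bigr => i _.
  by rewrite mulr_sumr; apply: eq_bigr => k _; rewrite exprMn.
by rewrite /T2 [X in _ * X]exchange_big.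
Qed.

Lemma s3 : \sum_i \sum_j \sum_k (A k * T i j) ^+ 2 = alpha * T2.
Proof.
rewrite mulrC /alpha /T2 mulr_suml; apply: eq_bigr => i _; rewrite mulr_suml; apply: eq_bigr => j _.
by rewrite mulr_sumr; apply: eq_bigr => k _; rewrite exprMn mulrC.
Qed.

Lemma c1 : \sum_i \sum_j \sum_k ((A i * T j k) * (A j * T k i)) = - Z.
Proof.
rewrite swap3.
transitivity (\sum_k (\sum_i A i * T k i) * (\sum_j A j * T j k)).
  apply: eq_bigr => k _; rewrite big_distrlr; apply: eq_bigr => i _; apply: eq_bigr => j _ /=; ring.
rewrite /Z -sumrN; apply: eq_bigr => k _; rewrite wneg; rewrite /w; ring.
Qed.

Lemma c2 : \sum_i \sum_j \sum_k ((A j * T k i) * (A k * T i j)) = - Z.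
Proof.
transitivity (\sum_i (\sum_j A j * T i j) * (\sum_k A k * T k i)).
  apply: eq_bigr => i _; rewrite big_distrlr; apply: eq_bigr => j _; apply: eq_bigr => k _ /=; ring.
rewrite /Z -sumrN; apply: eq_bigr => k _; rewrite wneg; rewrite /w; ring.
Qed.

Lemma c3 : \sum_i \sum_j \sum_k ((A i * T j k) * (A k * T i j)) = - Z.
Proof.
rewrite exchange_big /=.
transitivity (\sum_j (\sum_i A i * T i j) * (\sum_k A k * T j k)).
  apply: eq_bigr => j _; rewrite big_distrlr; apply: eq_bigr => i _; apply: eq_bigr => k _ /=; ring.
rewrite /Z -sumrN; apply: eq_bigr => k _; rewrite wneg; rewrite /w; ring.
Qed.

Lemma E2 : 0 <= alpha * T2 - 2 * Z.
Proof.
have h : \sum_i \sum_j \sum_k (A i * T j k + A j * T k i + A k * T i j) ^+ 2 =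
   3 * (alpha * T2 - 2 * Z).
  rewrite (eq_bigr (fun i => \sum_j \sum_k ((A i * T j k) ^+ 2 + (A j * T k i) ^+ 2
     + (A k * T i j) ^+ 2 + 2 * ((A i * T j k) * (A j * T k i))
     + 2 * ((A j * T k i) * (A k * T i j)) + 2 * ((A i * T j k) * (A k * T i j))))); last first.
    by move=> i _; apply: eq_bigr => j _; apply: eq_bigr => k _; ring.
  rewrite !sum3D !sum3Z s1 s2 s3 c1 c2 c3; ring.
have : 0 <= \sum_i \sum_j \sum_k (A i * T j k + A j * T k i + A k * T i j) ^+ 2.
  by apply: sumr_ge0 => i _; apply: sumr_ge0 => j _; apply: sumr_ge0 => k _; apply: sqr_ge0.
rewrite h => h'; lra.
Qed.

Lemma core (v : 'I_n -> R) : T2 <= 2 * \sum_i \sum_j (A i * v j + T i j) ^+ 2.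
Proof.
set X := \sum_j v j ^+ 2.
set Y := \sum_j v j * w j.
have E1 : \sum_i \sum_j (A i * v j + T i j) ^+ 2 = alpha * X + 2 * Y + T2.
  rewrite (eq_bigr (fun i => \sum_j (A i ^+ 2 * v j ^+ 2 + 2 * (A i * T i j * v j)
     + T i j ^+ 2))); last by move=> i _; apply: eq_bigr => j _; ring.
  rewrite !sum2D; congr (_ + _ + _).
    by rewrite /alpha /X big_distrlr.
  rewrite /Y mulr_sumr exchange_big /=; apply: eq_bigr => j _.
  rewrite /w mulr_sumr mulr_sumr; apply: eq_bigr => i _; ring.
have E3 : \sum_j (alpha * v j + w j) ^+ 2 = alpha ^+ 2 * X + 2 * alpha * Y + Z.
  rewrite (eq_bigr (fun j => alpha ^+ 2 * v j ^+ 2 + 2 * alpha * (v j * w j) + w j ^+ 2)); last first.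
    by move=> j _; ring.
  by rewrite !big_split /= -!mulr_sumr.
have U0 : 0 <= \sum_j (alpha * v j + w j) ^+ 2 by apply: sumr_ge0 => j _; apply: sqr_ge0.
have hE2 := E2.
have a0 : 0 <= alpha by apply: sumr_ge0 => i _; apply: sqr_ge0.
have T0 : 0 <= T2 by apply: sumr_ge0 => i _; apply: sumr_ge0 => j _; apply: sqr_ge0.
rewrite E1; rewrite E3 in U0.
case: (eqVneq alpha 0) => ha.
  have A0 : forall i, A i = 0.
    move=> i; have := @psumr_eq0P _ _ xpredT (fun i => A i ^+ 2).
    move=> /(_ (fun i _ => sqr_ge0 (A i)) ha i isT) /eqP; rewrite sqrf_eq0 => /eqP //.
  have Y0 : Y = 0 by rewrite /Y big1 // => j _; rewrite /w big1 ?mulr0 // => i _; rewrite A0 mul0r.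
  rewrite ha Y0; lra.
have ap : 0 < alpha by rewrite lt_def ha a0.
have : alpha * T2 <= alpha * (2 * (alpha * X + 2 * Y + T2)) by nra.
by rewrite ler_pM2l.
Qed.

End Core.

Lemma jensen D (c x : nat -> R) :
  (\sum_(m < D) c m * x m) ^+ 2 <= (\sum_(m < D) `|c m|) * \sum_(m < D) `|c m| * x m ^+ 2.
Proof.
have pw : forall a b y z : R, (a * y) * (b * z) * 2 <= `|a| * `|b| * y ^+ 2 + `|a| * `|b| * z ^+ 2.
  move=> a b y z.
  have h1 : (a * y) * (b * z) <= `|a| * `|b| * (`|y| * `|z|).
    apply: le_trans (ler_norm _) _; rewrite !normrM le_eqVlt; apply/orP; left; apply/eqP; ring.
  have h2 : 2 * (`|y| * `|z|) <= y ^+ 2 + z ^+ 2.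
    rewrite -(real_normK (num_real y)) -(real_normK (num_real z)).
    have := sqr_ge0 (`|y| - `|z|); lra.
  have h3 : 0 <= `|a| * `|b| by rewrite mulr_ge0.
  nra.
rewrite expr2 big_distrlr /=.
have : \sum_(m < D) \sum_(l < D) (c m * x m) * (c l * x l) * 2 <=
       \sum_(m < D) \sum_(l < D) (`|c m| * `|c l| * x m ^+ 2 + `|c m| * `|c l| * x l ^+ 2).
  by apply: ler_sum => m _; apply: ler_sum => l _; apply: pw.
set C := \sum_(m < D) `|c m|.
set W := \sum_(m < D) `|c m| * x m ^+ 2.
have P1 : \sum_(m < D) \sum_(l < D) `|c m| * `|c l| * x m ^+ 2 = W * C.
  rewrite /W /C mulr_suml; apply: eq_bigr => m _; rewrite mulr_sumr; apply: eq_bigr => l _; ring.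
have P2 : \sum_(m < D) \sum_(l < D) `|c m| * `|c l| * x l ^+ 2 = C * W.
  rewrite /W /C big_distrlr; apply: eq_bigr => m _; apply: eq_bigr => l _ /=; ring.
have S2 : \sum_(m < D) \sum_(l < D) (`|c m| * `|c l| * x m ^+ 2 + `|c m| * `|c l| * x l ^+ 2)
   = W * C + C * W.
  rewrite -P1 -P2 -big_split; apply: eq_bigr => m _; by rewrite -big_split.
have S3 : \sum_(m < D) \sum_(l < D) c m * x m * (c l * x l) * 2 =
   (\sum_(m < D) \sum_(l < D) c m * x m * (c l * x l)) * 2.
  rewrite mulr_suml; apply: eq_bigr => m _; by rewrite mulr_suml.
rewrite S2 S3 => h; lra.
Qed.


Lemma part_bound D (c : nat -> R) q (beta : 'I_q -> R) (Ar : 'I_n -> R)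
  (s : nat -> 'I_n -> R) (Br : 'I_q -> 'I_n -> 'I_n -> R) (Tr : 'I_n -> 'I_n -> R) :
  (forall i j, Tr j i = - Tr i j) ->
  (forall k, \sum_(m < D) c m * sin (m%:R * beta k) = 0) ->
  (\sum_(m < D) c m * m%:R) ^+ 2 * \sum_i \sum_j Tr i j ^+ 2 <=
  2 * (\sum_(m < D) `|c m|) * \sum_(m < D) `|c m| *
     \sum_i \sum_j (Ar i * s m j + \sum_k sin (m%:R * beta k) * Br k i j
                    + m%:R * Tr i j) ^+ 2.
Proof.
move=> skT kill.
set K := \sum_(m < D) c m * m%:R.
set C := \sum_(m < D) `|c m|.
set r := fun (m : nat) i j => Ar i * s m j + \sum_k sin (m%:R * beta k) * Br k i j + m%:R * Tr i j.
set v := fun j => \sum_(m < D) c m * s m j.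
have lin : forall i j, \sum_(m < D) c m * r m i j = Ar i * v j + K * Tr i j.
  move=> i j.
  rewrite /r (eq_bigr (fun m : 'I_D => Ar i * (c m * s m j) +
     \sum_k Br k i j * (c m * sin (m%:R * beta k)) + Tr i j * (c m * m%:R))); last first.
    by move=> m _; rewrite mulrDr mulrDr mulr_sumr; congr (_ + _ + _);
      [ring | apply: eq_bigr => k _; ring | ring].
  rewrite !big_split /= -!mulr_sumr [X in _ + X + _]exchange_big /=.
  rewrite [X in _ + X + _]big1 ?addr0; last by move=> k _; rewrite -mulr_sumr kill mulr0.
  by rewrite /K /v [_ * Tr i j]mulrC.
have skK : forall i j, (K * Tr j i) = - (K * Tr i j) by move=> i j; rewrite skT mulrN.
have hc := @core Ar (fun i j => K * Tr i j) skK v.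
have e1 : \sum_i \sum_j (K * Tr i j) ^+ 2 = K ^+ 2 * \sum_i \sum_j Tr i j ^+ 2.
  rewrite mulr_sumr; apply: eq_bigr => i _; rewrite mulr_sumr; apply: eq_bigr => j _.
  by rewrite exprMn.
rewrite e1 in hc; apply: le_trans hc _.
rewrite -mulrA ler_pM2l //.
have e2 : \sum_(m < D) `|c m| * \sum_i \sum_j r m i j ^+ 2 =
    \sum_i \sum_j \sum_(m < D) `|c m| * r m i j ^+ 2.
  transitivity (\sum_(m < D) \sum_i \sum_j `|c m| * r m i j ^+ 2).
    apply: eq_bigr => m _; rewrite mulr_sumr; apply: eq_bigr => i _; by rewrite mulr_sumr.
  rewrite [LHS]exchange_big /=; apply: eq_bigr => i _; by rewrite [LHS]exchange_big.
rewrite e2 mulr_sumr; apply: ler_sum => i _; rewrite mulr_sumr; apply: ler_sum => j _.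
by rewrite -lin; apply: (jensen D c (fun m => r m i j)).
Qed.

End B.

Section Main.
Variable R : realType.
Local Open Scope complex_scope.

Lemma ReD (x y : R[i]) : complex.Re (x + y) = complex.Re x + complex.Re y.
Proof. by case: x; case: y. Qed.
Lemma ImD (x y : R[i]) : complex.Im (x + y) = complex.Im x + complex.Im y.
Proof. by case: x; case: y. Qed.
Lemma Re0 : complex.Re (0 : R[i]) = 0. Proof. by []. Qed.
Lemma Im0 : complex.Im (0 : R[i]) = 0. Proof. by []. Qed.
Lemma ReN (x : R[i]) : complex.Re (- x) = - complex.Re x. Proof. by case: x. Qed.
Lemma ImN (x : R[i]) : complex.Im (- x) = - complex.Im x. Proof. by case: x. Qed.
Lemma ReMr (x : R[i]) (r : R) : complex.Re (x * r%:C) = complex.Re x * r.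
Proof. by case: x => a b /=; ring. Qed.
Lemma ImMr (x : R[i]) (r : R) : complex.Im (x * r%:C) = complex.Im x * r.
Proof. by case: x => a b /=; ring. Qed.
Lemma ReMl (x : R[i]) (r : R) : complex.Re (r%:C * x) = r * complex.Re x.
Proof. by case: x => a b /=; ring. Qed.
Lemma ImMl (x : R[i]) (r : R) : complex.Im (r%:C * x) = r * complex.Im x.
Proof. by case: x => a b /=; ring. Qed.
Lemma Re_sum I (r : seq I) (F : I -> R[i]) :
  complex.Re (\sum_(i <- r) F i) = \sum_(i <- r) complex.Re (F i).
Proof. by apply: (big_morph _ ReD Re0). Qed.
Lemma Im_sum I (r : seq I) (F : I -> R[i]) :
  complex.Im (\sum_(i <- r) F i) = \sum_(i <- r) complex.Im (F i).
Proof. by apply: (big_morph _ ImD Im0). Qed.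

End Main.

Theorem lemma3p19 (R : realType) (n q : nat) (beta : 'I_q -> R) :
  (0 < n)%N ->
  exists N : nat, (0 < N)%N /\
    forall (a : 'cV[R[i]]_n) (alpha : 'I_n -> R) (B : 'I_q -> 'M[R[i]]_n)
           (S : 'M[R[i]]_n),
      S^T = - S ->
      frob S <=
      \big[Num.max/0]_(1 <= m < N.+1)
        frob (a *m sinrow m alpha
              + \sum_(k < q) ((sin (m%:R * beta k))%:C)%C *: B k
              + (m%:R : R[i]) *: S).
Proof.
move=> n0.
have [D [c [c0 cD ck Cp KC]]] := @stepA R q beta.
have D0 : (0 < D)%N.
  by case: D {cD ck KC} Cp => [|D] //; rewrite big_ord0 ltxx.
exists D; split => // a alpha B S hS.
set M := fun m : nat => a *m sinrow m alpha
              + \sum_(k < q) ((sin (m%:R * beta k))%:C)%C *: B k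
              + (m%:R : R[i]) *: S.
set Mx := \big[Num.max/0]_(1 <= m < D.+1) _.
have hM : forall m, (1 <= m <= D)%N -> frob (M m) <= Mx.
  move=> m hm; rewrite /Mx.
  apply: (@le_bigmax_seq _ _ _ (index_iota 1 D.+1) 0 m xpredT (fun m => frob (M m))) => //.
  by rewrite mem_index_iota.
have Mx0 : 0 <= Mx by apply: le_trans (hM 1%N _); [apply: sqrtr_ge0 | rewrite /= D0].
set FRe := fun X : 'M[R[i]]_n => \sum_i \sum_j complex.Re (X i j) ^+ 2.
set FIm := fun X : 'M[R[i]]_n => \sum_i \sum_j complex.Im (X i j) ^+ 2.
have F0 : forall X, 0 <= FRe X + FIm X.
  by move=> X; apply: addr_ge0; apply: sumr_ge0 => i _; apply: sumr_ge0 => j _; apply: sqr_ge0.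
have frobE : forall X, frob X ^+ 2 = FRe X + FIm X.
  move=> X; rewrite /frob sqr_sqrtr; first by rewrite sum2D.
  by rewrite sum2D; apply: F0.
have Mij : forall m i j, M m i j = a i 0 * ((sin (m%:R * alpha j))%:C)%C
    + \sum_k ((sin (m%:R * beta k))%:C)%C * B k i j + ((m%:R)%:C)%C * S i j.
  move=> m i j; rewrite /M !mxE summxE big_ord1 !mxE rmorph_nat.
  by congr (_ + _ + _); apply: eq_bigr => k _; rewrite mxE.
have Sskew : forall i j, S j i = - S i j.
  by move=> i j; have := congr1 (fun X : 'M[R[i]]_n => X i j) hS; rewrite !mxE.
set K := \sum_(m < D) c m * m%:R.
set C := \sum_(m < D) `|c m|.
have KC' : 2 * C <= K := KC.
have Cp' : 0 < C := Cp.
clear KC Cp.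
have hRe : K ^+ 2 * FRe S <= 2 * C * \sum_(m < D) `|c m| * FRe (M m).
  have := @part_bound R n D c q beta (fun i => complex.Re (a i 0))
    (fun m j => sin (m%:R * alpha j)) (fun k i j => complex.Re (B k i j))
    (fun i j => complex.Re (S i j)) _ ck.
  move=> /(_ _) h; apply: le_trans (h _) _.
    by move=> i j; rewrite Sskew ReN.
  rewrite le_eqVlt; apply/orP; left; apply/eqP; congr (_ * _); apply: eq_bigr => m _.
  congr (_ * _); apply: eq_bigr => i _; apply: eq_bigr => j _.
  rewrite Mij !ReD Re_sum ReMr ReMl; congr ((_ + _ + _) ^+ 2).
  by apply: eq_bigr => k _; rewrite ReMl.
have hIm : K ^+ 2 * FIm S <= 2 * C * \sum_(m < D) `|c m| * FIm (M m).
  have := @part_bound R n D c q beta (fun i => complex.Im (a i 0))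
    (fun m j => sin (m%:R * alpha j)) (fun k i j => complex.Im (B k i j))
    (fun i j => complex.Im (S i j)) _ ck.
  move=> /(_ _) h; apply: le_trans (h _) _.
    by move=> i j; rewrite Sskew ImN.
  rewrite le_eqVlt; apply/orP; left; apply/eqP; congr (_ * _); apply: eq_bigr => m _.
  congr (_ * _); apply: eq_bigr => i _; apply: eq_bigr => j _.
  rewrite Mij !ImD Im_sum ImMr ImMl; congr ((_ + _ + _) ^+ 2).
  by apply: eq_bigr => k _; rewrite ImMl.
have hsum : \sum_(m < D) `|c m| * (FRe (M m) + FIm (M m)) <= C * Mx ^+ 2.
  rewrite /C mulr_suml; apply: ler_sum => m _.
  case: (eqVneq (m : nat) 0%N) => [m0 | m0].
    by rewrite m0 c0 normr0 !mul0r.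
  apply: ler_wpM2l; first exact: normr_ge0.
  rewrite -frobE.
  have h : frob (M m) <= Mx by apply: hM; have := ltn_ord m; lia.
  have f0 : 0 <= frob (M m) by apply: sqrtr_ge0.
  nra.
have hF : K ^+ 2 * (FRe S + FIm S) <= 2 * C * (C * Mx ^+ 2).
  apply: le_trans _ (ler_wpM2l _ hsum); last by rewrite mulr_ge0 // ltW.
  rewrite (eq_bigr (fun m : 'I_D => `|c m| * FRe (M m) + `|c m| * FIm (M m))); last first.
    by move=> m _; rewrite mulrDr.
  by rewrite big_split /= !mulrDr; apply: lerD.
have FS0 := F0 S.
set FS := FRe S + FIm S in hF FS0.
have hC2 : 0 < C ^+ 2 by apply: exprn_gt0.
have hK2 : 4 * C ^+ 2 <= K ^+ 2.
  have h1 : 0 <= K - 2 * C by lra.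
  have h2 : 0 <= K + 2 * C by lra.
  have := mulr_ge0 h1 h2; nra.
have h4 : 4 * C ^+ 2 * FS <= K ^+ 2 * FS by apply: ler_wpM2r.
have hFS : FS <= Mx ^+ 2.
  have e : 2 * C * (C * Mx ^+ 2) = C ^+ 2 * (2 * Mx ^+ 2) by ring.
  have h5 : C ^+ 2 * (4 * FS) <= C ^+ 2 * (2 * Mx ^+ 2).
    rewrite -e; apply: le_trans hF; rewrite mulrA [C ^+ 2 * 4]mulrC; exact: h4.
  rewrite ler_pM2l // in h5.
  have hM2 : 0 <= Mx ^+ 2 by apply: sqr_ge0.
  lra.
have fS0 : 0 <= frob S by apply: sqrtr_ge0.
have hfs : frob S ^+ 2 <= Mx ^+ 2 by rewrite frobE.
nra.
Qed.
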